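(* Let $N^{[0]}$ be a $C^0$ net on the grid $T^{[0]}$ with lines $s^{[0]}_i=t^{[0]}_i=i$, $i\in\mathbb{Z}$, having the BMSDD property with constant $L$, and let $N^{[k]}$ on grids $T^{[k]}$ (lines $s^{[k]}_i$, $t^{[k]}_j$), $k\ge0$, be generated by the corner cutting algorithm for nets of functions (described in the context) with weights $\boldsymbol{\gamma}^{[s],[k]},\boldsymbol{\gamma}^{[t],[k]}\in\mathscr{W}$. Then for every $k\ge0$, $$\|\mathcal{C}(N^{[k+1]})-\mathcal{C}(N^{[k]})\|_\infty\le 3^{k+1}L\,\frac{h_s^{[k+1]}h_t^{[k+1]}}{4},$$ where $h_s^{[k+1]}=\sup_{i\in\mathbb{Z}}(s^{[k+1]}_{i+1}-s^{[k+1]}_i)$, $h_t^{[k+1]}=\sup_{i\in\mathbb{Z}}(t^{[k+1]}_{i+1}-t^{[k+1]}_i)$, and the norm on the left is the supremum over $\mathbb{R}^2$.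
   Context: $\mathscr{W}$ is the set of pairs $(\boldsymbol{\alpha},\boldsymbol{\beta})$ of real bi-infinite sequences with $\inf_i\min\{\alpha_i,1-\beta_i,\beta_i-\alpha_i\}>0$. For strictly increasing bi-infinite real sequences $(s_i)$, $(t_j)$, unbounded above and below, the grid is $T=\bigcup_i\{s_i\}\times\mathbb{R}\cup\bigcup_j\mathbb{R}\times\{t_j\}$. A net $N(T)$ is a function on $T$ with values in $\mathbb{R}^m$; it is $C^0$ if all u-functions $s\mapsto N(s,t_j)$, $t\mapsto N(s_i,t)$ are continuous. The piecewise Coons patch $\mathcal{C}(N)$ is defined on each rectangle $[s_i,s_{i+1}]\times[t_j,t_{j+1}]$, with $h_1=s_{i+1}-s_i$, $h_2=t_{j+1}-t_j$, by $\mathcal{C}(N)(s,t)=\frac{s_{i+1}-s}{h_1}N(s_i,t)+\frac{s-s_i}{h_1}N(s_{i+1},t)+\frac{t_{j+1}-t}{h_2}N(s,t_j)+\frac{t-t_j}{h_2}N(s,t_{j+1})-B(s,t)$, with $B(s,t)=\frac{s_{i+1}-s}{h_1}\big(\frac{t_{j+1}-t}{h_2}N(s_i,t_j)+\frac{t-t_j}{h_2}N(s_i,t_{j+1})\big)+\frac{s-s_i}{h_1}\big(\frac{t_{j+1}-t}{h_2}N(s_{i+1},t_j)+\frac{t-t_j}{h_2}N(s_{i+1},t_{j+1})\big)$. Algorithm: given $N^{[k]}$ on grid $T^{[k]}$ with lines $s^{[k]}_i,t^{[k]}_j$, set $s^{[k+1]}_{2i}=(1-\alpha^{[s],[k]}_i)s^{[k]}_i+\alpha^{[s],[k]}_is^{[k]}_{i+1}$,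 $s^{[k+1]}_{2i+1}=(1-\beta^{[s],[k]}_i)s^{[k]}_i+\beta^{[s],[k]}_is^{[k]}_{i+1}$, and analogously for $t^{[k+1]}$ with $\boldsymbol{\gamma}^{[t],[k]}=(\boldsymbol{\alpha}^{[t],[k]},\boldsymbol{\beta}^{[t],[k]})$; $T^{[k+1]}$ is the grid with these lines and $N^{[k+1]}=\mathcal{C}(N^{[k]})|_{T^{[k+1]}}$. For $\sigma_1\ne\sigma_2$, $\tau_1\ne\tau_2$, $[\sigma_1,\sigma_2;\tau_1,\tau_2]N=\frac{N(\sigma_1,\tau_1)+N(\sigma_2,\tau_2)-N(\sigma_2,\tau_1)-N(\sigma_1,\tau_2)}{(\sigma_1-\sigma_2)(\tau_1-\tau_2)}$; a net on a grid has the BMSDD property with constant $L$ if $\|[\sigma_1,\sigma_2;\tau_1,\tau_2]N\|_\infty\le L$ whenever all four points $(\sigma_i,\tau_j)$ lie on the grid. *)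

(* Defs.v *)
From HB Require Import structures.
From mathcomp Require Import all_boot all_order all_algebra.
From mathcomp Require Import all_classical all_reals all_analysis.
Set Implicit Arguments. Unset Strict Implicit. Unset Printing Implicit Defensive.
Import Order.TTheory GRing.Theory Num.Theory.
Import numFieldNormedType.Exports.
Local Open Scope classical_set_scope.
Local Open Scope ring_scope.

(* Values in R^m are row vectors 'rV[R]_m; the norm `|v| on 'rV[R]_m is the
   max (infinity) norm (mx_norm). Indices i in Z are of type int. A net on a
   grid is modelled as a total function R -> R -> 'rV[R]_m of which only the
   values on the grid are ever used. *)

Definition inW (R : realType) (alpha beta : int -> R) : Prop :=
  exists eps : R, 0 < eps /\
    forall i : int, eps <= alpha i /\ eps <= 1 - beta i /\ eps <= beta i - alpha i.

Definition on_grid (R : realType) (s t : int -> R) (x y : R) : Prop :=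
  (exists i : int, x = s i) \/ (exists j : int, y = t j).

Definition C0_net (R : realType) (m : nat) (s t : int -> R)
  (N : R -> R -> 'rV[R]_m) : Prop :=
  (forall j : int, continuous (fun x : R => N x (t j))) /\
  (forall i : int, continuous (fun y : R => N (s i) y)).

Definition divdiff (R : realType) (m : nat) (N : R -> R -> 'rV[R]_m)
  (s1 s2 t1 t2 : R) : 'rV[R]_m :=
  ((s1 - s2) * (t1 - t2))^-1 *: (N s1 t1 + N s2 t2 - N s2 t1 - N s1 t2).

Definition BMSDD (R : realType) (m : nat) (s t : int -> R)
  (N : R -> R -> 'rV[R]_m) (L : R) : Prop :=
  forall s1 s2 t1 t2 : R, s1 != s2 -> t1 != t2 ->
    on_grid s t s1 t1 -> on_grid s t s1 t2 ->
    on_grid s t s2 t1 -> on_grid s t s2 t2 ->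
    `|divdiff N s1 s2 t1 t2| <= L.

Definition coons_cell (R : realType) (m : nat) (s t : int -> R)
  (N : R -> R -> 'rV[R]_m) (i j : int) (x y : R) : 'rV[R]_m :=
  let h1 := s (i + 1) - s i in
  let h2 := t (j + 1) - t j in
  let B := ((s (i + 1) - x) / h1) *:
             (((t (j + 1) - y) / h2) *: N (s i) (t j)
              + ((y - t j) / h2) *: N (s i) (t (j + 1)))
         + ((x - s i) / h1) *:
             (((t (j + 1) - y) / h2) *: N (s (i + 1)) (t j)
              + ((y - t j) / h2) *: N (s (i + 1)) (t (j + 1))) in
  ((s (i + 1) - x) / h1) *: N (s i) y + ((x - s i) / h1) *: N (s (i + 1)) y
  + ((t (j + 1) - y) / h2) *: N x (t j) + ((y - t j) / h2) *: N x (t (j + 1))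
  - B.

Definition in_cell (R : realType) (s t : int -> R) (i j : int) (x y : R) : Prop :=
  s i <= x <= s (i + 1) /\ t j <= y <= t (j + 1).

Definition refine_step (R : realType) (alpha beta : int -> R)
  (s s' : int -> R) : Prop :=
  forall i : int,
    s' (2 * i) = (1 - alpha i) * s i + alpha i * s (i + 1) /\
    s' (2 * i + 1) = (1 - beta i) * s i + beta i * s (i + 1).

Definition mesh (R : realType) (s : int -> R) : R :=
  sup (range (fun i : int => s (i + 1) - s i)).

(* Main.v *)
Require Import Defs.
From HB Require Import structures.
From mathcomp Require Import all_boot all_order all_algebra.
From mathcomp Require Import all_classical all_reals all_analysis.
From mathcomp Require Import ring lra zify.
Import Order.TTheory GRing.Theory Num.Theory.
Import numFieldNormedType.Exports.
Local Open Scope classical_set_scope.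
Local Open Scope ring_scope.
Set Implicit Arguments. Unset Strict Implicit.

Lemma int_parity (z : int) : exists i : int, z = 2 * i \/ z = 2 * i + 1.
Proof.
exists (z %/ 2)%Z.
have := divz_eq z 2.
have h0 := modz_ge0 z (isT : (2:int) != 0).
have h1 := ltz_pmod z (isT : (0:int) < 2).
move: (z %% 2)%Z h0 h1 => r h0 h1 ->.
lia.
Qed.

Lemma incr_lt (R : realType) (f : int -> R) :
  (forall i, f i < f (i + 1)) -> forall i j, i < j -> f i < f j.
Proof.
move=> H i j ij.
have [n ->] : exists n : nat, j = i + (n.+1)%:Z.
  exists (absz (j - i - 1)%R). lia.
elim: n => [|n IH]; first by [].
apply: (lt_trans IH).
have -> : i + (n.+2)%:Z = (i + (n.+1)%:Z) + 1 by lia.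
exact: H.
Qed.

Lemma incr_le (R : realType) (f : int -> R) :
  (forall i, f i < f (i + 1)) -> forall i j, i <= j -> f i <= f j.
Proof.
move=> H i j; rewrite le_eqVlt => /orP [/eqP -> //| ij].
exact/ltW/incr_lt.
Qed.

Lemma inW_facts (R : realType) (a b : int -> R) :
  inW a b -> forall i, 0 < a i /\ a i < b i /\ b i < 1.
Proof.
move=> [e [e0 He]] i; have [h1 [h2 h3]] := He i.
split; [|split]; lra.
Qed.

Lemma refine_mono (R : realType) (a b : int -> R) (s s' : int -> R) :
  inW a b -> refine_step a b s s' -> (forall i, s i < s (i+1)) ->
  forall i, s' i < s' (i+1).
Proof.
move=> W Hr Hs i'.
have [i [->|->]] := int_parity i'.
- have [-> ->] := Hr i.
  have [ha [hab hb]] := inW_facts W i.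
  have hs := Hs i.
  have : 0 < (b i - a i) * (s (i+1) - s i) by apply: mulr_gt0; lra.
  lra.
- have -> : 2 * i + 1 + 1 = 2 * (i + 1) by ring.
  have [_ ->] := Hr i. have [-> _] := Hr (i+1).
  have [ha [hab hb]] := inW_facts W i.
  have [ha' [hab' hb']] := inW_facts W (i+1).
  have hs := Hs i. have hs' := Hs (i+1).
  have : 0 < (1 - b i) * (s (i+1) - s i) by apply: mulr_gt0; lra.
  have : 0 <= a (i+1) * (s (i+1+1) - s (i+1)) by apply: mulr_ge0; lra.
  lra.
Qed.

Lemma refine_cover (R : realType) (a b : int -> R) (s s' : int -> R) :
  inW a b -> refine_step a b s s' -> (forall i, s i < s (i+1)) ->
  (forall x, exists i, s i <= x <= s (i+1)) ->
  forall x, exists i, s' i <= x <= s' (i+1).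
Proof.
move=> W Hr Hs Hc x.
have [i /andP [h1 h2]] := Hc x.
have [ha [hab hb]] := inW_facts W i.
have [ha' [hab' hb']] := inW_facts W (i-1).
have [ha'' [hab'' hb'']] := inW_facts W (i+1).
have [e0 e1] := Hr i. have [_ e2] := Hr (i-1). have [e3 _] := Hr (i+1).
rewrite subrK in e2.
have hs := Hs i. have hs' := Hs (i-1). have hs'' := Hs (i+1).
rewrite subrK in hs'.
have p1 : 0 <= (1 - b (i-1)) * (s i - s (i-1)) by apply: mulr_ge0; lra.
have p2 : 0 <= a (i+1) * (s (i+1+1) - s (i+1)) by apply: mulr_ge0; lra.
have p3 : 0 <= (1 - b i) * (s (i+1) - s i) by apply: mulr_ge0; lra.
have p4 : 0 <= (b i - a i) * (s (i+1) - s i) by apply: mulr_ge0; lra.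
case: (lerP x (s' (2 * i))) => c1.
  exists (2 * (i - 1) + 1).
  have -> : 2 * (i - 1) + 1 + 1 = 2 * i by ring.
  rewrite c1 e2 andbT. lra.
case: (lerP x (s' (2 * i + 1))) => c2.
  exists (2 * i). rewrite c2 andbT. exact: ltW.
exists (2 * i + 1).
have -> : 2 * i + 1 + 1 = 2 * (i + 1) by ring.
rewrite (ltW c2) /= e3. lra.
Qed.

Lemma refine_gap (R : realType) (a b : int -> R) (s s' : int -> R) :
  inW a b -> refine_step a b s s' -> (forall i, s i < s (i+1)) ->
  (exists B, forall i, s (i+1) - s i <= B) ->
  exists B, forall i, s' (i+1) - s' i <= B.
Proof.
move=> W Hr Hs [B HB]; exists (B + B) => i'.
have B0 : 0 <= B by have := HB 0; have := Hs 0; lra.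
have [i [->|->]] := int_parity i'.
- have [-> ->] := Hr i.
  have [ha [hab hb]] := inW_facts W i.
  have hs := Hs i. have hB := HB i.
  have : 0 <= (1 - b i + a i) * (s (i+1) - s i) by apply: mulr_ge0; lra.
  lra.
- have -> : 2 * i + 1 + 1 = 2 * (i + 1) by ring.
  have [_ ->] := Hr i. have [-> _] := Hr (i+1).
  have [ha [hab hb]] := inW_facts W i.
  have [ha' [hab' hb']] := inW_facts W (i+1).
  have hs := Hs i. have hs' := Hs (i+1). have hB := HB i. have hB' := HB (i+1).
  have : 0 <= b i * (s (i+1) - s i) by apply: mulr_ge0; lra.
  have : 0 <= (1 - a (i+1)) * (s (i+1+1) - s (i+1)) by apply: mulr_ge0; lra.
  lra.
Qed.

Lemma coons_x0 (R : realType) (m : nat) (s t : int -> R) (N : R -> R -> 'rV[R]_m) i j y :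
  s (i+1) - s i != 0 -> t (j+1) - t j != 0 -> coons_cell s t N i j (s i) y = N (s i) y.
Proof.
move=> h h'; apply/rowP => c; rewrite /coons_cell !mxE.
by field; rewrite h h'.
Qed.

Lemma coons_x1 (R : realType) (m : nat) (s t : int -> R) (N : R -> R -> 'rV[R]_m) i j y :
  s (i+1) - s i != 0 -> t (j+1) - t j != 0 -> coons_cell s t N i j (s (i+1)) y = N (s (i+1)) y.
Proof.
move=> h h'; apply/rowP => c; rewrite /coons_cell !mxE.
by field; rewrite h h'.
Qed.

Lemma coons_y0 (R : realType) (m : nat) (s t : int -> R) (N : R -> R -> 'rV[R]_m) i j x :
  s (i+1) - s i != 0 -> t (j+1) - t j != 0 -> coons_cell s t N i j x (t j) = N x (t j).
Proof.
move=> h h'; apply/rowP => c; rewrite /coons_cell !mxE.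
by field; rewrite h h'.
Qed.

Lemma coons_y1 (R : realType) (m : nat) (s t : int -> R) (N : R -> R -> 'rV[R]_m) i j x :
  s (i+1) - s i != 0 -> t (j+1) - t j != 0 -> coons_cell s t N i j x (t (j+1)) = N x (t (j+1)).
Proof.
move=> h h'; apply/rowP => c; rewrite /coons_cell !mxE.
by field; rewrite h h'.
Qed.

Lemma cell_unique (R : realType) (s : int -> R) :
  (forall i, s i < s (i+1)) -> forall i i' x,
  s i <= x <= s (i+1) -> s i' <= x <= s (i'+1) ->
  i = i' \/ (i' = i + 1 /\ x = s (i+1)) \/ (i = i' + 1 /\ x = s i).
Proof.
move=> Hs i i' x /andP [h1 h2] /andP [h3 h4].
case: (ltgtP i i') => c; last by left.
- right; left.
  case: (ltgtP i' (i+1)) => c'.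
  + lia.
  + have := incr_lt Hs c'. lra.
  + split => //; rewrite c' in h3; lra.
- right; right.
  case: (ltgtP i (i'+1)) => c'.
  + lia.
  + have := incr_lt Hs c'. lra.
  + split => //; rewrite -c' in h4; lra.
Qed.

Lemma gap_nz (R : realType) (s : int -> R) :
  (forall i, s i < s (i+1)) -> forall i, s (i+1) - s i != 0.
Proof. move=> Hs i; have := Hs i; rewrite subr_eq0; apply: contraTneq => ->; by rewrite ltxx. Qed.

Lemma coons_wd (R : realType) (m : nat) (s t : int -> R) (N : R -> R -> 'rV[R]_m) :
  (forall i, s i < s (i+1)) -> (forall j, t j < t (j+1)) ->
  forall i j i' j' x y, in_cell s t i j x y -> in_cell s t i' j' x y ->
  coons_cell s t N i j x y = coons_cell s t N i' j' x y.
Proof.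
move=> Hs Ht i j i' j' x y [hx hy] [hx' hy'].
have gs := gap_nz Hs; have gt := gap_nz Ht.
have -> : coons_cell s t N i j x y = coons_cell s t N i' j x y.
  have [<-|[[-> ->]|[-> ->]]] := cell_unique Hs hx hx' => //.
  - by rewrite coons_x1 // coons_x0.
  - by rewrite coons_x0 // coons_x1.
have [<-|[[-> ->]|[-> ->]]] := cell_unique Ht hy hy' => //.
- by rewrite coons_y1 // coons_y0.
- by rewrite coons_y0 // coons_y1.
Qed.

Definition D2 (R : realType) (m : nat) (F : R -> R -> 'rV[R]_m) (x1 x2 y1 y2 : R) :=
  F x1 y1 + F x2 y2 - F x2 y1 - F x1 y2.

Definition Gprop (R : realType) (m : nat) (s t : int -> R) (N : R -> R -> 'rV[R]_m) (M : R) :=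
  forall x1 x2 y1 y2, on_grid s t x1 y1 -> on_grid s t x1 y2 ->
  on_grid s t x2 y1 -> on_grid s t x2 y2 ->
  `|D2 N x1 x2 y1 y2| <= M * `|x1 - x2| * `|y1 - y2|.

Lemma D2_coons (R : realType) (m : nat) (s t : int -> R) (N : R -> R -> 'rV[R]_m) i j x1 x2 y1 y2 :
  s (i+1) - s i != 0 -> t (j+1) - t j != 0 ->
  D2 (coons_cell s t N i j) x1 x2 y1 y2 =
    ((x2 - x1) / (s (i+1) - s i)) *: D2 N (s i) (s (i+1)) y1 y2
  + ((y2 - y1) / (t (j+1) - t j)) *: D2 N x1 x2 (t j) (t (j+1))
  - ((x2 - x1) / (s (i+1) - s i) * ((y2 - y1) / (t (j+1) - t j))) *:
       D2 N (s i) (s (i+1)) (t j) (t (j+1)).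
Proof.
move=> h h'; apply/rowP => c; rewrite /D2 /coons_cell !mxE.
by field; rewrite h h'.
Qed.

Lemma norm3 (R : realType) (m : nat) (u v w : 'rV[R]_m) :
  `|u + v - w| <= `|u| + `|v| + `|w|.
Proof.
apply: (le_trans (ler_normD _ _)); rewrite normrN lerD2r; exact: ler_normD.
Qed.

Lemma local_bound (R : realType) (m : nat) (s t : int -> R) (N : R -> R -> 'rV[R]_m) M i j :
  (forall i, s i < s (i+1)) -> (forall j, t j < t (j+1)) ->
  Gprop s t N M -> forall x1 x2 y1 y2,
  `|D2 (coons_cell s t N i j) x1 x2 y1 y2| <= 3 * M * `|x1 - x2| * `|y1 - y2|.
Proof.
move=> Hs Ht G x1 x2 y1 y2.
rewrite D2_coons ?gap_nz //.
set h1 := s (i+1) - s i. set h2 := t (j+1) - t j.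
have h1p : 0 < h1 by rewrite subr_gt0.
have h2p : 0 < h2 by rewrite subr_gt0.
have eA : `|s i - s (i+1)| = h1 by rewrite distrC gtr0_norm.
have eB : `|t j - t (j+1)| = h2 by rewrite distrC gtr0_norm.
have gA : `|D2 N (s i) (s (i+1)) y1 y2| <= M * h1 * `|y1 - y2|.
  rewrite -eA; apply: G; by left; eexists.
have gB : `|D2 N x1 x2 (t j) (t (j+1))| <= M * `|x1 - x2| * h2.
  rewrite -eB; apply: G; by right; eexists.
have gC : `|D2 N (s i) (s (i+1)) (t j) (t (j+1))| <= M * h1 * h2.
  rewrite -eA -eB; apply: G; by left; eexists.
have ex : `|x2 - x1| * `|h1^-1| = `|x1 - x2| / h1.
  by rewrite normfV (gtr0_norm h1p) distrC.
have ey : `|y2 - y1| * `|h2^-1| = `|y1 - y2| / h2.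
  by rewrite normfV (gtr0_norm h2p) distrC.
apply: (le_trans (norm3 _ _ _)); rewrite !normrZ ex ey.
have ax : 0 <= `|x1 - x2| / h1 by rewrite divr_ge0 // ltW.
have ay : 0 <= `|y1 - y2| / h2 by rewrite divr_ge0 // ltW.
have t1 := ler_wpM2l ax gA.
have t2 := ler_wpM2l ay gB.
have t3 := ler_wpM2l (mulr_ge0 ax ay) gC.
have e1 : `|x1 - x2| / h1 * (M * h1 * `|y1 - y2|) = M * `|x1 - x2| * `|y1 - y2|.
  by field; rewrite gt_eqF.
have e2 : `|y1 - y2| / h2 * (M * `|x1 - x2| * h2) = M * `|x1 - x2| * `|y1 - y2|.
  by field; rewrite gt_eqF.
have e3 : `|x1 - x2| / h1 * (`|y1 - y2| / h2) * (M * h1 * h2) = M * `|x1 - x2| * `|y1 - y2|.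
  by field; rewrite !gt_eqF.
rewrite e1 in t1; rewrite e2 in t2; rewrite e3 in t3.
lra.
Qed.

Definition cellof (R : realType) (s : int -> R) (x : R) : int :=
  if pselect (exists i, s i <= x <= s (i+1)) is left h then projT1 (cid h) else 0.

Lemma cellofP (R : realType) (s : int -> R) x :
  (exists i, s i <= x <= s (i+1)) -> s (cellof s x) <= x <= s (cellof s x + 1).
Proof. rewrite /cellof; case: pselect => // h _; exact: (projT2 (cid h)). Qed.

Definition Fc (R : realType) (m : nat) (s t : int -> R) (N : R -> R -> 'rV[R]_m) x y :=
  coons_cell s t N (cellof s x) (cellof t y) x y.

Lemma Fc_eq (R : realType) (m : nat) (s t : int -> R) (N : R -> R -> 'rV[R]_m) i j x y :
  (forall i, s i < s (i+1)) -> (forall j, t j < t (j+1)) ->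
  in_cell s t i j x y -> Fc s t N x y = coons_cell s t N i j x y.
Proof.
move=> Hs Ht [hx hy]; rewrite /Fc; apply: coons_wd => //; split => //.
- by apply: cellofP; exists i.
- by apply: cellofP; exists j.
Qed.

Lemma chain (R : realType) (s : int -> R) (P : R -> R -> Prop) :
  (forall i, s i < s (i+1)) -> (forall x, exists i, s i <= x <= s (i+1)) ->
  (forall x1 x2 x3, x1 <= x2 -> x2 <= x3 -> P x1 x2 -> P x2 x3 -> P x1 x3) ->
  (forall x1 x2, P x1 x2 -> P x2 x1) ->
  (forall i x1 x2, s i <= x1 <= s (i+1) -> s i <= x2 <= s (i+1) -> P x1 x2) ->
  forall x1 x2, P x1 x2.
Proof.
move=> Hs Cs Tr Sy Lo x1 x2.
wlog le12 : x1 x2 / x1 <= x2.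
  move=> H; case: (lerP x1 x2) => [/H //|/ltW/H]; exact: Sy.
have [i2 h2] := Cs x2.
have [i1 h1] := Cs x1.
case: (ltP i2 i1) => c.
  have : s (i2 + 1) <= s i1 by apply: incr_le => //; lia.
  move: h1 h2 => /andP [h1 h1'] /andP [h2 h2'] hh.
  have e : x1 = x2 by lra.
  rewrite -e; apply: (Lo i1); by rewrite h1 h1'.
have [n En] : exists n : nat, i2 = i1 + n%:Z.
  by exists (absz (i2 - i1)%R); lia.
rewrite En in h2; clear c En.
elim: n i1 x1 le12 h1 h2 => [|n IH] i1 x1 le12 h1 h2.
  by rewrite addr0 in h2; apply: (Lo i1).
have z1 : s i1 <= s (i1 + 1) by apply/ltW.
have z2 : s (i1 + 1) <= x2.
  move: h2 => /andP [h2 _]; apply: le_trans h2; apply: incr_le => //; lia.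
apply: (Tr _ (s (i1 + 1))) => //.
- by move: h1 => /andP [].
- by apply: (Lo i1) => //; rewrite z1 lexx.
- apply: (IH (i1 + 1)) => //.
  + by rewrite lexx /= ltW.
  + by have -> : i1 + 1 + n%:Z = i1 + n.+1%:Z by lia.
Qed.

Lemma dist3 (R : realType) (a b c : R) : a <= b -> b <= c ->
  `|a - c| = `|a - b| + `|b - c|.
Proof.
move=> hab hbc.
rewrite (ler0_norm (_ : a - c <= 0)) ?(ler0_norm (_ : a - b <= 0))
  ?(ler0_norm (_ : b - c <= 0)); lra.
Qed.

Lemma F_global (R : realType) (m : nat) (s t : int -> R) (N : R -> R -> 'rV[R]_m) M :
  (forall i, s i < s (i+1)) -> (forall j, t j < t (j+1)) ->
  (forall x, exists i, s i <= x <= s (i+1)) -> (forall y, exists j, t j <= y <= t (j+1)) ->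
  Gprop s t N M -> forall x1 x2 y1 y2,
  `|D2 (Fc s t N) x1 x2 y1 y2| <= 3 * M * `|x1 - x2| * `|y1 - y2|.
Proof.
move=> Hs Ht Cs Ct G.
set F := Fc s t N.
have splitx : forall x1 x2 x3 y1 y2, D2 F x1 x3 y1 y2 = D2 F x1 x2 y1 y2 + D2 F x2 x3 y1 y2.
  by move=> *; rewrite /D2; apply/rowP => c; rewrite !mxE; ring.
have splity : forall x1 x2 y1 y2 y3, D2 F x1 x2 y1 y3 = D2 F x1 x2 y1 y2 + D2 F x1 x2 y2 y3.
  by move=> *; rewrite /D2; apply/rowP => c; rewrite !mxE; ring.
have symx : forall x1 x2 y1 y2, D2 F x2 x1 y1 y2 = - D2 F x1 x2 y1 y2.
  by move=> *; rewrite /D2; apply/rowP => c; rewrite !mxE; ring.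
have symy : forall x1 x2 y1 y2, D2 F x1 x2 y2 y1 = - D2 F x1 x2 y1 y2.
  by move=> *; rewrite /D2; apply/rowP => c; rewrite !mxE; ring.
have step1 : forall j y1 y2, t j <= y1 <= t (j+1) -> t j <= y2 <= t (j+1) ->
    forall x1 x2, `|D2 F x1 x2 y1 y2| <= 3 * M * `|x1 - x2| * `|y1 - y2|.
  move=> j y1 y2 hy1 hy2.
  apply: (@chain R s (fun x1 x2 => `|D2 F x1 x2 y1 y2| <= 3 * M * `|x1 - x2| * `|y1 - y2|) Hs Cs).
  - move=> a b c hab hbc Pab Pbc.
    rewrite (splitx a b c) (dist3 hab hbc) mulrDr mulrDl.
    apply: le_trans (ler_normD _ _) _; exact: lerD.
  - by move=> a b H; rewrite symx normrN (distrC b a).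
  - move=> i a b ha hb.
    have FE : forall x y, s i <= x <= s (i+1) -> t j <= y <= t (j+1) ->
        F x y = coons_cell s t N i j x y.
      by move=> x y hx hy; apply: Fc_eq.
    rewrite /D2 !FE //.
    exact: local_bound.
suff H : forall y1 y2 x1 x2, `|D2 F x1 x2 y1 y2| <= 3 * M * `|x1 - x2| * `|y1 - y2|.
  by move=> x1 x2 y1 y2; apply: H.
apply: (@chain R t (fun y1 y2 => forall x1 x2, `|D2 F x1 x2 y1 y2| <= 3 * M * `|x1 - x2| * `|y1 - y2|) Ht Ct).
- move=> a b c hab hbc Pab Pbc x1 x2.
  rewrite (splity x1 x2 a b c) (dist3 hab hbc) mulrDr.
  apply: le_trans (ler_normD _ _) _; exact: lerD.
- by move=> a b H x1 x2; rewrite symy normrN (distrC b).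
- move=> j a b ha hb x1 x2; exact: (step1 j).
Qed.

Lemma Gstep (R : realType) (m : nat) (s t s' t' : int -> R) (N N' : R -> R -> 'rV[R]_m) M :
  (forall i, s i < s (i+1)) -> (forall j, t j < t (j+1)) ->
  (forall x, exists i, s i <= x <= s (i+1)) -> (forall y, exists j, t j <= y <= t (j+1)) ->
  Gprop s t N M ->
  (forall x y i j, on_grid s' t' x y -> in_cell s t i j x y ->
      N' x y = coons_cell s t N i j x y) ->
  Gprop s' t' N' (3 * M).
Proof.
move=> Hs Ht Cs Ct G HN x1 x2 y1 y2 g11 g12 g21 g22.
have E : forall x y, on_grid s' t' x y -> N' x y = Fc s t N x y.
  move=> x y g; rewrite /Fc; apply: HN => //; split; apply: cellofP; [exact: Cs | exact: Ct].
have -> : D2 N' x1 x2 y1 y2 = D2 (Fc s t N) x1 x2 y1 y2.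
  by rewrite /D2 (E x1 y1) // (E x2 y2) // (E x2 y1) // (E x1 y2).
exact: F_global.
Qed.

Lemma D2_xx (R : realType) (m : nat) (F : R -> R -> 'rV[R]_m) x y1 y2 : D2 F x x y1 y2 = 0.
Proof. by rewrite /D2; apply/rowP => c; rewrite !mxE; ring. Qed.

Lemma D2_yy (R : realType) (m : nat) (F : R -> R -> 'rV[R]_m) x1 x2 y : D2 F x1 x2 y y = 0.
Proof. by rewrite /D2; apply/rowP => c; rewrite !mxE; ring. Qed.

Lemma G0 (R : realType) (m : nat) (s t : int -> R) (N : R -> R -> 'rV[R]_m) L :
  BMSDD s t N L -> Gprop s t N L.
Proof.
move=> B x1 x2 y1 y2 g11 g12 g21 g22.
case: (eqVneq x1 x2) => [->|nx].
  by rewrite D2_xx normr0 subrr normr0 mulr0 mul0r.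
case: (eqVneq y1 y2) => [->|ny].
  by rewrite D2_yy normr0 subrr normr0 mulr0.
have := B x1 x2 y1 y2 nx ny g11 g12 g21 g22.
rewrite /divdiff normrZ normfV normrM mulrC ler_pdivrMr; last first.
  by rewrite mulr_gt0 // normr_gt0 subr_eq0.
by rewrite mulrA.
Qed.

Lemma mesh_ge (R : realType) (s : int -> R) :
  (exists B, forall i, s (i+1) - s i <= B) -> forall i, s (i+1) - s i <= mesh s.
Proof.
move=> [B HB] i; apply: sup_upper_bound; last by exists i.
split; first by exists (s (0+1) - s 0); exists 0.
by exists B => _ [p _ <-]; exact: HB.
Qed.

Lemma coons_ext (R : realType) (m : nat) (s t : int -> R) (N N' : R -> R -> 'rV[R]_m) i j x y :
  (forall p y, N (s p) y = N' (s p) y) -> (forall x q, N x (t q) = N' x (t q)) ->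
  coons_cell s t N i j x y = coons_cell s t N' i j x y.
Proof. by move=> HA HB; rewrite /coons_cell !HA !HB. Qed.

Lemma coons_err (R : realType) (m : nat) (s t : int -> R) (F : R -> R -> 'rV[R]_m) i j x y :
  s (i+1) - s i != 0 -> t (j+1) - t j != 0 ->
  coons_cell s t F i j x y - F x y = - (
    ((s (i+1) - x) / (s (i+1) - s i) * ((t (j+1) - y) / (t (j+1) - t j))) *: D2 F x (s i) y (t j)
  + ((s (i+1) - x) / (s (i+1) - s i) * ((y - t j) / (t (j+1) - t j))) *: D2 F x (s i) y (t (j+1))
  + ((x - s i) / (s (i+1) - s i) * ((t (j+1) - y) / (t (j+1) - t j))) *: D2 F x (s (i+1)) y (t j)
  + ((x - s i) / (s (i+1) - s i) * ((y - t j) / (t (j+1) - t j))) *: D2 F x (s (i+1)) y (t (j+1))).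
Proof.
move=> h h'; apply/rowP => c; rewrite /D2 /coons_cell !mxE.
by field; rewrite h h'.
Qed.

Lemma norm4 (R : realType) (m : nat) (u v w z : 'rV[R]_m) :
  `|u + v + w + z| <= `|u| + `|v| + `|w| + `|z|.
Proof.
apply: (le_trans (ler_normD _ _)); rewrite lerD2r.
apply: (le_trans (ler_normD _ _)); rewrite lerD2r.
exact: ler_normD.
Qed.

Lemma half_bound (R : realType) (u v : R) : 0 <= u -> 0 <= v -> 0 < u + v ->
  2 * u * v / (u + v) <= (u + v) / 2.
Proof.
move=> hu hv hp.
rewrite -subr_ge0.
have -> : (u + v) / 2 - 2 * u * v / (u + v) = (u - v) * (u - v) / (2 * (u + v)).
  by field; rewrite gt_eqF.
rewrite divr_ge0 //; first by rewrite -expr2 sqr_ge0.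
rewrite mulr_ge0 // ltW //.
Qed.

Lemma coons_err_bound (R : realType) (m : nat) (s t : int -> R) (F : R -> R -> 'rV[R]_m) i j x y K :
  s i < s (i+1) -> t j < t (j+1) -> in_cell s t i j x y -> 0 <= K ->
  (forall p q, `|D2 F x p y q| <= K * `|x - p| * `|y - q|) ->
  `|coons_cell s t F i j x y - F x y| <= K * ((s (i+1) - s i) / 2) * ((t (j+1) - t j) / 2).
Proof.
move=> hs ht [/andP [hx1 hx2] /andP [hy1 hy2]] K0 HD.
rewrite coons_err; first last.
  by rewrite subr_eq0 gt_eqF.
  by rewrite subr_eq0 gt_eqF.
rewrite normrN.
have -> : s (i+1) - s i = (s (i+1) - x) + (x - s i) by ring.
have -> : t (j+1) - t j = (t (j+1) - y) + (y - t j) by ring.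
have n1 : `|x - s i| = x - s i by rewrite ger0_norm // subr_ge0.
have n2 : `|x - s (i+1)| = s (i+1) - x by rewrite distrC ger0_norm // subr_ge0.
have n3 : `|y - t j| = y - t j by rewrite ger0_norm // subr_ge0.
have n4 : `|y - t (j+1)| = t (j+1) - y by rewrite distrC ger0_norm // subr_ge0.
have e1 : (s (i+1) - x) + (x - s i) = s (i+1) - s i by ring.
have e2 : (t (j+1) - y) + (y - t j) = t (j+1) - t j by ring.
move: n1 n2 n3 n4 (HD (s i) (t j)) (HD (s i) (t (j+1))) (HD (s (i+1)) (t j)) (HD (s (i+1)) (t (j+1))).
have hu : 0 <= s (i+1) - x by rewrite subr_ge0.
have hv : 0 <= x - s i by rewrite subr_ge0.
have hw : 0 <= t (j+1) - y by rewrite subr_ge0.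
have hz : 0 <= y - t j by rewrite subr_ge0.
have hh1 : 0 < (s (i+1) - x) + (x - s i) by rewrite e1 subr_gt0.
have hh2 : 0 < (t (j+1) - y) + (y - t j) by rewrite e2 subr_gt0.
move: (s (i+1) - x) (x - s i) (t (j+1) - y) (y - t j) hu hv hw hz hh1 hh2 => u v w z hu hv hw hz hh1 hh2.
move=> -> -> -> -> b1 b2 b3 b4.
apply: (le_trans (norm4 _ _ _ _)).
rewrite !normrZ.
have c1 : 0 <= u / (u + v) by rewrite divr_ge0 // ltW.
have c2 : 0 <= v / (u + v) by rewrite divr_ge0 // ltW.
have c3 : 0 <= w / (w + z) by rewrite divr_ge0 // ltW.
have c4 : 0 <= z / (w + z) by rewrite divr_ge0 // ltW.
rewrite !ger0_norm ?mulr_ge0 //; try by rewrite invr_ge0 ltW.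
have t1 := ler_wpM2l (mulr_ge0 c1 c3) b1.
have t2 := ler_wpM2l (mulr_ge0 c1 c4) b2.
have t3 := ler_wpM2l (mulr_ge0 c2 c3) b3.
have t4 := ler_wpM2l (mulr_ge0 c2 c4) b4.
apply: (le_trans (lerD (lerD (lerD t1 t2) t3) t4)).
have -> : u / (u + v) * (w / (w + z)) * (K * v * z) + u / (u + v) * (z / (w + z)) * (K * v * w) +
  v / (u + v) * (w / (w + z)) * (K * u * z) + v / (u + v) * (z / (w + z)) * (K * u * w)
  = K * (2 * u * v / (u + v)) * (2 * w * z / (w + z)).
  by field; rewrite !gt_eqF.
have U0 : 0 <= 2 * u * v / (u + v) by rewrite divr_ge0 ?mulr_ge0 // ltW.
have V0 : 0 <= 2 * w * z / (w + z) by rewrite divr_ge0 ?mulr_ge0 // ltW.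
apply: ler_pM; first by rewrite mulr_ge0.
- exact: V0.
- by apply: ler_wpM2l => //; apply: half_bound.
- exact: half_bound.
Qed.
Unset Implicit Arguments.
Theorem theorem4 (R : realType) (m : nat) (L : R)
  (as_ bs at_ bt : nat -> int -> R)
  (s t : nat -> int -> R) (N : nat -> R -> R -> 'rV[R]_m) :
  (forall k, inW (as_ k) (bs k)) ->
  (forall k, inW (at_ k) (bt k)) ->
  (forall i : int, s 0%N i = i%:~R) ->
  (forall j : int, t 0%N j = j%:~R) ->
  C0_net (s 0%N) (t 0%N) (N 0%N) ->
  BMSDD (s 0%N) (t 0%N) (N 0%N) L ->
  (forall k, refine_step (as_ k) (bs k) (s k) (s k.+1)) ->
  (forall k, refine_step (at_ k) (bt k) (t k) (t k.+1)) ->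
  (forall k (x y : R) (i j : int),
      on_grid (s k.+1) (t k.+1) x y -> in_cell (s k) (t k) i j x y ->
      N k.+1 x y = coons_cell (s k) (t k) (N k) i j x y) ->
  forall k (x y : R) (i j i' j' : int),
    in_cell (s k.+1) (t k.+1) i' j' x y -> in_cell (s k) (t k) i j x y ->
    `|coons_cell (s k.+1) (t k.+1) (N k.+1) i' j' x y
      - coons_cell (s k) (t k) (N k) i j x y|
    <= 3 ^+ k.+1 * L * (mesh (s k.+1) * mesh (t k.+1) / 4).
Proof.
move=> W1 W2 Hs0 Ht0 _ HB Rs Rt HN.
have base_mono : forall (f : int -> R), (forall i, f i = i%:~R) -> forall i, f i < f (i+1).
  by move=> f Hf i; rewrite !Hf intrD ltrDl ltr01.
have base_cov : forall (f : int -> R), (forall i, f i = i%:~R) ->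
    forall x, exists i, f i <= x <= f (i+1).
  move=> f Hf x; exists (Num.floor x); rewrite !Hf floor_le /=; exact: ltW (floorD1_gt x).
have base_gap : forall (f : int -> R), (forall i, f i = i%:~R) ->
    exists B, forall i, f (i+1) - f i <= B.
  by move=> f Hf; exists 1 => i; rewrite !Hf intrD addrAC subrr add0r.
have monoS : forall k i, s k i < s k (i+1).
  elim=> [|k IH]; first exact: base_mono.
  exact: (refine_mono (W1 k) (Rs k) IH).
have monoT : forall k i, t k i < t k (i+1).
  elim=> [|k IH]; first exact: base_mono.
  exact: (refine_mono (W2 k) (Rt k) IH).
have covS : forall k x, exists i, s k i <= x <= s k (i+1).
  elim=> [|k IH]; first exact: base_cov.
  exact: (refine_cover (W1 k) (Rs k) (monoS k) IH).
have covT : forall k x, exists i, t k i <= x <= t k (i+1).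
  elim=> [|k IH]; first exact: base_cov.
  exact: (refine_cover (W2 k) (Rt k) (monoT k) IH).
have gapS : forall k, exists B, forall i, s k (i+1) - s k i <= B.
  elim=> [|k IH]; first exact: base_gap.
  exact: (refine_gap (W1 k) (Rs k) (monoS k) IH).
have gapT : forall k, exists B, forall i, t k (i+1) - t k i <= B.
  elim=> [|k IH]; first exact: base_gap.
  exact: (refine_gap (W2 k) (Rt k) (monoT k) IH).
have L0 : 0 <= L.
  have g00 : on_grid (s 0%N) (t 0%N) 0 0 by left; exists 0; rewrite Hs0.
  have g01 : on_grid (s 0%N) (t 0%N) 0 1 by left; exists 0; rewrite Hs0.
  have g10 : on_grid (s 0%N) (t 0%N) 1 0 by left; exists 1; rewrite Hs0.
  have g11 : on_grid (s 0%N) (t 0%N) 1 1 by left; exists 1; rewrite Hs0.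
  have n01 : (0 : R) != 1 by rewrite eq_sym oner_neq0.
  exact: le_trans (normr_ge0 _) (HB 0 1 0 1 n01 n01 g00 g01 g10 g11).
have Gall : forall k, Gprop (s k) (t k) (N k) (3 ^+ k * L).
  elim=> [|k IH]; first by rewrite expr0 mul1r; apply: G0.
  rewrite exprS -mulrA.
  exact: (Gstep (monoS k) (monoT k) (covS k) (covT k) IH (HN k)).
move=> k x y i j i' j' cf cc.
set F := Fc (s k) (t k) (N k).
have e1 : coons_cell (s k) (t k) (N k) i j x y = F x y.
  by symmetry; apply: Fc_eq.
have EN : forall x y, on_grid (s k.+1) (t k.+1) x y -> N k.+1 x y = F x y.
  move=> x' y' g; rewrite /F /Fc; apply: HN => //; split; apply: cellofP; [exact: covS | exact: covT].
have e2 : coons_cell (s k.+1) (t k.+1) (N k.+1) i' j' x y = coons_cell (s k.+1) (t k.+1) F i' j' x y.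
  apply: coons_ext => [p y'|x' q]; apply: EN; [left | right]; by eexists.
rewrite e1 e2.
have K0 : 0 <= 3 * (3 ^+ k * L) by rewrite mulr_ge0 // mulr_ge0 // exprn_ge0.
have H := @coons_err_bound R m (s k.+1) (t k.+1) F i' j' x y _ (monoS k.+1 i') (monoT k.+1 j') cf K0
  (fun p q => F_global (monoS k) (monoT k) (covS k) (covT k) (Gall k) x p y q).
apply: (le_trans H).
have m1 := mesh_ge (gapS k.+1) i'.
have m2 := mesh_ge (gapT k.+1) j'.
have h1 : 0 <= s k.+1 (i'+1) - s k.+1 i' by rewrite subr_ge0 ltW.
have h2 : 0 <= t k.+1 (j'+1) - t k.+1 j' by rewrite subr_ge0 ltW.
have -> : 3 ^+ k.+1 * L * (mesh (s k.+1) * mesh (t k.+1) / 4) =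
  3 * (3 ^+ k * L) * (mesh (s k.+1) / 2) * (mesh (t k.+1) / 2) by rewrite exprS; field.
apply: ler_pM.
- by rewrite mulr_ge0 // divr_ge0.
- by rewrite divr_ge0.
- by apply: ler_wpM2l => //; rewrite ler_pM2r ?invr_gt0.
- by rewrite ler_pM2r ?invr_gt0.
Qed.
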